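(* Let $(\mathbb{K},\partial)$ be a differential field whose field of constants $C$ is algebraically closed of characteristic zero, let $L\in\mathbb{K}[\partial]$ be of order $n$ in normal form, and let $\mathcal{G}=\{G_0=1,G_1,\ldots,G_{t-1}\}$ be a Goodearl basis of $\mathcal{C}(L)$ as a $C[L]$-module. Then the quotient ring $\mathbb{K}[\Gamma]:=\mathbb{K}[\lambda,\mu_1,\ldots,\mu_{t-1}]/[\mathrm{BC}(L)]$ is a differential integral domain.
   Context: $L=\partial^n+u_{n-2}\partial^{n-2}+\dots+u_0$. $\mathcal{C}(L)=\{A\in\mathbb{K}[\partial]:LA=AL\}$. A Goodearl basis is a $C[L]$-module basis $\{G_0=1,\ldots,G_{t-1}\}$ of $\mathcal{C}(L)$ in which each $G_k$ has minimal order among $Q\in\mathcal{C}(L)$ with $\mathrm{ord}(Q)\equiv\mathrm{ord}(G_k)\pmod n$ and the classes $\mathrm{ord}(G_k)\bmod n$ are pairwise distinct and exhaust the classes mod $n$ of orders of elements of $\mathcal{C}(L)$. $\mathrm{BC}(L)\subset C[\lambda,\mu_1,\ldots,\mu_{t-1}]$ is the kernel of the $C$-algebra map $\phi_L$: $\lambda\mapsto L$, $\mu_i\mapsto G_i$ (the Burchnall–Chaundy ideal). $\mathbb{K}[\lambda,\mu_1,\ldots,\mu_{t-1}]$ is a differential ring with derivation extending $\partial$ on coefficients and $\partial(\lambda)=\partial(\mu_i)=0$; $[\mathrm{BC}(L)]$ is the differential ideal generated by $\mathrm{BC}(L)$ in it, and the quotient carries the induced derivation. *)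

(* Defs.v *)
From HB Require Import structures.
From mathcomp Require Import all_boot all_order all_algebra.
From mathcomp Require Import mpoly.
Set Implicit Arguments. Unset Strict Implicit. Unset Printing Implicit Defensive.
Import Order.TTheory GRing.Theory.
Local Open Scope ring_scope.

Definition is_derivation (K : fieldType) (d : K -> K) : Prop :=
  (forall x y, d (x + y) = d x + d y) /\ (forall x y, d (x * y) = d x * y + x * d y).

Definition is_const (K : fieldType) (d : K -> K) (x : K) : Prop := d x = 0.

Definition const_alg_closed (K : fieldType) (d : K -> K) : Prop :=
  forall p : {poly K}, (forall i, is_const d p`_i) -> (1 < size p)%N ->
    exists x, is_const d x /\ root p x.

(* characteristic zero (of K, equivalently of its subfield C) *)
Definition char_zero (K : fieldType) : Prop := forall m : nat, (m.+1)%:R != 0 :> K.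

(* An operator sum_i a_i ∂^i is represented by the polynomial sum_i a_i X^i
   (coefficients on the left).  Multiplication uses
   (a ∂^i)(b ∂^j) = sum_k C(i,k) a d^k(b) ∂^(i+j-k). *)
Definition dmul (K : fieldType) (d : K -> K) (P Q : {poly K}) : {poly K} :=
  \sum_(i < size P) \sum_(j < size Q) \sum_(k < i.+1)
     ((P`_i * iter k d Q`_j) *+ 'C(i, k)) *: 'X^(i + j - k).

Definition dpow (K : fieldType) (d : K -> K) (A : {poly K}) (k : nat) : {poly K} :=
  iter k (dmul d A) 1.

Definition ord_op (K : fieldType) (P : {poly K}) : nat := (size P).-1.

Definition normal_form (K : fieldType) (n : nat) (L : {poly K}) : Prop :=
  size L = n.+1 /\ lead_coef L = 1 /\ L`_n.-1 = 0.

Definition in_centralizer (K : fieldType) (d : K -> K) (L A : {poly K}) : Prop :=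
  dmul d L A = dmul d A L.

Definition poly_in_L (K : fieldType) (d : K -> K) (L : {poly K}) (q : {poly K}) : {poly K} :=
  \sum_(i < size q) q`_i *: dpow d L i.

Definition const_poly (K : fieldType) (d : K -> K) (q : {poly K}) : Prop :=
  forall i, is_const d q`_i.

(* {G_0,...,G_{t-1}} (G : nat -> {poly K}, only i < t used) is a Goodearl basis
   of C(L) as a C[L]-module. *)
Definition goodearl_basis (K : fieldType) (d : K -> K) (n : nat) (L : {poly K})
    (t : nat) (G : nat -> {poly K}) : Prop :=
  (0 < t)%N /\ G 0%N = 1 /\
      (forall i, (i < t)%N -> in_centralizer d L (G i)) /\
      (forall q : nat -> {poly K}, (forall i, (i < t)%N -> const_poly d (q i)) ->
         \sum_(i < t) dmul d (poly_in_L d L (q i)) (G i) = 0 ->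
         forall i, (i < t)%N -> q i = 0) /\
      (forall A, in_centralizer d L A ->
         exists q : nat -> {poly K}, (forall i, (i < t)%N -> const_poly d (q i)) /\
           A = \sum_(i < t) dmul d (poly_in_L d L (q i)) (G i)) /\
      (forall k, (k < t)%N -> forall Q, in_centralizer d L Q -> Q != 0 ->
         ord_op Q = ord_op (G k) %[mod n] -> (ord_op (G k) <= ord_op Q)%N) /\
      (forall i j, (i < t)%N -> (j < t)%N ->
         ord_op (G i) = ord_op (G j) %[mod n] -> i = j) /\
      (forall Q, in_centralizer d L Q -> Q != 0 ->
         exists2 k, (k < t)%N & ord_op Q = ord_op (G k) %[mod n]).

(* Variables of {mpoly K[t]}: variable 0 is λ, variable i (1 <= i < t) is μ_i. *)
Definition bc_var (K : fieldType) (L : {poly K}) (t : nat) (G : nat -> {poly K})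
    (i : 'I_t) : {poly K} := if val i == 0%N then L else G (val i).

(* phi_L : λ ↦ L, μ_i ↦ G_i  (products taken in variable order) *)
Definition phiL (K : fieldType) (d : K -> K) (L : {poly K}) (t : nat)
    (G : nat -> {poly K}) (p : {mpoly K[t]}) : {poly K} :=
  \sum_(m <- msupp p)
     p@_m *: \big[dmul d/1]_(i < t) dpow d (bc_var L G i) (m i).

Definition in_BC (K : fieldType) (d : K -> K) (L : {poly K}) (t : nat)
    (G : nat -> {poly K}) (p : {mpoly K[t]}) : Prop :=
  (forall m, is_const d p@_m) /\ phiL d L G p = 0.

Definition mderivK (K : fieldType) (d : K -> K) (t : nat) (p : {mpoly K[t]}) : {mpoly K[t]} :=
  \sum_(m <- msupp p) d p@_m *: 'X_[m].

Definition is_ideal (K : fieldType) (t : nat) (I : {mpoly K[t]} -> Prop) : Prop :=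
  [/\ I 0, (forall a b, I a -> I b -> I (a + b)) & (forall r a, I a -> I (r * a))].

Definition diff_ideal_gen (K : fieldType) (d : K -> K) (t : nat)
    (S : {mpoly K[t]} -> Prop) (p : {mpoly K[t]}) : Prop :=
  forall I : {mpoly K[t]} -> Prop, is_ideal I -> (forall q, I q -> I (mderivK d q)) ->
    (forall q, S q -> I q) -> I p.

(* Main.v *)
Require Import Defs.
From HB Require Import structures.
From mathcomp Require Import all_boot all_order all_algebra.
From mathcomp Require Import mpoly.
From mathcomp Require Import zify.
Set Implicit Arguments. Unset Strict Implicit. Unset Printing Implicit Defensive.
Import Order.TTheory GRing.Theory.
Local Open Scope ring_scope.

Section Ops.
Variable (K : fieldType) (d : K -> K).
Hypothesis Hd : is_derivation d.
Hypothesis Hc : char_zero K.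
Implicit Types (P Q R A B f g : {poly K}).

Lemma dD x y : d (x + y) = d x + d y. Proof. by case: Hd. Qed.
Lemma dM x y : d (x * y) = d x * y + x * d y. Proof. by case: Hd. Qed.
Lemma d0 : d 0 = 0.
Proof. have H := dD 0 0; rewrite addr0 in H; apply: (addrI (d 0)); by rewrite addr0 -H. Qed.
Lemma d1 : d 1 = 0.
Proof. have H := dM 1 1; rewrite !mulr1 mul1r in H; apply: (addrI (d 1)); by rewrite addr0 -H. Qed.
Lemma dN x : d (- x) = - d x.
Proof. apply: (addrI (d x)); by rewrite -dD !subrr d0. Qed.
Lemma dB x y : d (x - y) = d x - d y. Proof. by rewrite dD dN. Qed.
Lemma dMn x m : d (x *+ m) = d x *+ m.
Proof. elim: m => [|m IH]; by rewrite ?mulr0n ?d0 // !mulrS dD IH. Qed.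
Lemma dnat m : d (m%:R) = 0. Proof. by rewrite dMn d1 mul0rn. Qed.
Lemma dsum I (r : seq I) (P : pred I) (F : I -> K) :
  d (\sum_(i <- r | P i) F i) = \sum_(i <- r | P i) d (F i).
Proof. exact: (big_morph d dD d0). Qed.
Lemma dV x : d x = 0 -> d (x^-1) = 0.
Proof.
move=> dx; have [->|x0] := eqVneq x 0; first by rewrite invr0 d0.
have H := dM x x^-1; rewrite mulfV // d1 dx mul0r add0r in H.
by move/eqP: H; rewrite eq_sym mulf_eq0 (negbTE x0) /= => /eqP.
Qed.
Lemma dconstM x y : d x = 0 -> d y = 0 -> d (x * y) = 0.
Proof. by move=> hx hy; rewrite dM hx hy mulr0 mul0r addr0. Qed.

Lemma iterd0 k : iter k d 0 = 0.
Proof. by elim: k => //= k ->; rewrite d0. Qed.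
Lemma iterdD k x y : iter k d (x + y) = iter k d x + iter k d y.
Proof. by elim: k => //= k ->; rewrite dD. Qed.

Definition Dp (f : {poly K}) : {poly K} := map_poly d f + f^`().

Lemma DpD f g : Dp (f + g) = Dp f + Dp g.
Proof.
rewrite /Dp derivD addrACA; congr (_ + _); apply/polyP => i.
by rewrite coefD !coef_map_id0 ?d0 // coefD dD.
Qed.
Lemma Dp0 : Dp 0 = 0.
Proof. by apply: (addrI (Dp 0)); rewrite -DpD !addr0. Qed.
Lemma DpN f : Dp (- f) = - Dp f.
Proof. by apply: (addrI (Dp f)); rewrite -DpD !subrr Dp0. Qed.
Lemma DpMn f m : Dp (f *+ m) = Dp f *+ m.
Proof. elim: m => [|m IH]; by rewrite ?mulr0n ?Dp0 // !mulrS DpD IH. Qed.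
Lemma DpZ c f : Dp (c *: f) = d c *: f + c *: Dp f.
Proof.
rewrite /Dp derivZ scalerDr addrA; congr (_ + _); apply/polyP => i.
by rewrite coefD !coefZ !coef_map_id0 ?d0 // coefZ dM.
Qed.
Lemma DpZc c f : d c = 0 -> Dp (c *: f) = c *: Dp f.
Proof. by move=> dc; rewrite DpZ dc scale0r add0r. Qed.

Lemma iterDpD k f g : iter k Dp (f + g) = iter k Dp f + iter k Dp g.
Proof. by elim: k => //= k ->; rewrite DpD. Qed.
Lemma iterDp0 k : iter k Dp 0 = 0.
Proof. by elim: k => //= k ->; rewrite Dp0. Qed.
Lemma iterDpsum k I (r : seq I) (P : pred I) (F : I -> {poly K}) :
  iter k Dp (\sum_(i <- r | P i) F i) = \sum_(i <- r | P i) iter k Dp (F i).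
Proof. exact: (big_morph _ (iterDpD k) (iterDp0 k)). Qed.
Lemma iterDpZc k c f : d c = 0 -> iter k Dp (c *: f) = c *: iter k Dp f.
Proof. by move=> dc; elim: k => //= k ->; rewrite DpZc. Qed.
Lemma iterDpMn k f m : iter k Dp (f *+ m) = iter k Dp f *+ m.
Proof. by elim: k => //= k ->; rewrite DpMn. Qed.

Lemma iterDp_leibniz i c f :
  iter i Dp (c *: f) =
  \sum_(k < i.+1) ((iter k d c) *: iter (i - k) Dp f) *+ 'C(i, k).
Proof.
elim: i => [|i IH]; first by rewrite big_ord1 /= ?subn0 bin0 mulr1n.
rewrite iterS IH.
rewrite (big_morph Dp DpD Dp0).
set F := fun k : nat => (iter k d c) *: iter (i.+1 - k) Dp f.
have E1 : forall k : 'I_i.+1, Dp ((iter k d c *: iter (i - k) Dp f) *+ 'C(i, k))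
    = (F k.+1 + F k) *+ 'C(i, k).
  move=> k; rewrite DpMn DpZ /F; congr (_ *+ _); congr (_ + _); rewrite ?subSS //.
  by rewrite -iterS subSn // -ltnS.
rewrite (eq_bigr _ (fun k _ => E1 k)) {E1}.
rewrite (eq_bigr (fun k : 'I_i.+1 => F k.+1 *+ 'C(i, k) + F k *+ 'C(i, k)));
  last by move=> k _; rewrite mulrnDl.
rewrite big_split /=.
have R : \sum_(k < i.+2) (iter k d c *: iter (i.+1 - k) Dp f) *+ 'C(i.+1, k)
   = F 0 + (\sum_(k < i.+1) F k.+1 *+ 'C(i, k.+1) + \sum_(k < i.+1) F k.+1 *+ 'C(i, k)).
  rewrite big_ord_recl /= bin0 mulr1n -big_split /=; congr (_ + _).
  by apply eq_bigr => k _; rewrite /bump /= add1n binS mulrnDr.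
rewrite R {R}.
have -> : \sum_(k < i.+1) F k *+ 'C(i, k) = F 0 + \sum_(k < i) F k.+1 *+ 'C(i, k.+1).
  by rewrite big_ord_recl /= bin0 mulr1n.
have -> : \sum_(k < i.+1) F k.+1 *+ 'C(i, k.+1) = \sum_(k < i) F k.+1 *+ 'C(i, k.+1).
  by rewrite big_ord_recr /= bin_small // mulr0n addr0.
rewrite addrC -addrA; congr (_ + _); by rewrite addrC.
Qed.

Definition act (P f : {poly K}) : {poly K} := \sum_(i < size P) P`_i *: iter i Dp f.

Lemma actE (P f : {poly K}) N : (size P <= N)%N -> act P f = \sum_(i < N) P`_i *: iter i Dp f.
Proof.
move=> HN; rewrite /act (big_ord_widen N (fun i => P`_i *: iter i Dp f)) //.
rewrite big_mkcond; apply eq_bigr => i _; case: ifP => // /negbT; rewrite -leqNgt => H.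
by rewrite nth_default // scale0r.
Qed.

Lemma act_add P Q f : act (P + Q) f = act P f + act Q f.
Proof.
set N := maxn (size P) (size Q).
rewrite (@actE _ f N (size_polyD _ _)) (@actE P f N (leq_maxl _ _)).
rewrite (@actE Q f N (leq_maxr _ _)) -big_split; apply eq_bigr => i _.
by rewrite coefD scalerDl.
Qed.
Lemma act_scale c P f : act (c *: P) f = c *: act P f.
Proof.
rewrite (@actE _ f (size P) (size_scale_leq c P)) /act scaler_sumr; apply eq_bigr => i _.
by rewrite coefZ scalerA.
Qed.
Lemma act0 f : act 0 f = 0.
Proof. by rewrite /act size_poly0 big_ord0. Qed.
Lemma act_opp P f : act (- P) f = - act P f.
Proof. by rewrite -scaleN1r act_scale scaleN1r. Qed.
Lemma act_sum I (r : seq I) (Pr : pred I) (F : I -> {poly K}) f :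
  act (\sum_(i <- r | Pr i) F i) f = \sum_(i <- r | Pr i) act (F i) f.
Proof. exact: (big_morph (act^~ f) (fun P Q => act_add P Q f) (act0 f)). Qed.
Lemma act_Xn c e f : act (c *: 'X^e) f = c *: iter e Dp f.
Proof.
rewrite act_scale /act size_polyXn big_ord_recr /= big1 ?add0r.
  by rewrite coefXn eqxx scale1r.
by move=> i _; rewrite coefXn ltn_eqF // scale0r.
Qed.
Lemma act1 f : act 1 f = f.
Proof. by have := act_Xn 1 0 f; rewrite scale1r expr0 scale1r. Qed.

Lemma act_addf P f g : act P (f + g) = act P f + act P g.
Proof. by rewrite /act -big_split; apply eq_bigr => i _; rewrite iterDpD scalerDr. Qed.
Lemma act_scalec P c f : d c = 0 -> act P (c *: f) = c *: act P f.
Proof.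
move=> dc; rewrite /act scaler_sumr; apply eq_bigr => i _.
by rewrite iterDpZc // !scalerA mulrC.
Qed.

Lemma act_dmul P Q f : act (dmul d P Q) f = act P (act Q f).
Proof.
rewrite /dmul act_sum [RHS]/act; apply eq_bigr => i _.
rewrite act_sum iterDpsum scaler_sumr; apply eq_bigr => j _.
rewrite act_sum iterDp_leibniz scaler_sumr; apply eq_bigr => k _.
rewrite act_Xn -iterD addnBAC; last by rewrite -ltnS.
rewrite scalerMnr scalerA -scalerMnl.
by rewrite scalerMnr.
Qed.

Lemma DpXn k : Dp 'X^k = 'X^(k.-1) *+ k.
Proof.
rewrite /Dp derivXn; have -> : map_poly d 'X^k = 0; last by rewrite add0r.
by apply/polyP => i; rewrite coef_map_id0 ?d0 // coefXn dnat coef0.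
Qed.
Lemma iterDpXn i k : iter i Dp 'X^k = 'X^(k - i) *+ (k ^_ i).
Proof.
elim: i => [|i IH]; first by rewrite subn0 ffactn0 mulr1n.
by rewrite iterS IH DpMn DpXn -mulrnA subnS ffactnSr mulnC.
Qed.

Lemma natr_fact_neq0 k : (k`!)%:R != 0 :> K.
Proof. by rewrite -(prednK (fact_gt0 k)); apply: Hc. Qed.

Lemma act_Xk (P : {poly K}) k : (forall i, (i < k)%N -> P`_i = 0) ->
  act P 'X^k = (P`_k *+ k`!)%:P.
Proof.
move=> Hi; set N := maxn (size P) k.+1.
have kN : (k < N)%N by rewrite leq_max ltnSn orbT.
rewrite (@actE _ _ N (leq_maxl _ _)) (bigD1 (Ordinal kN)) //= big1 ?addr0.
  by rewrite iterDpXn subnn expr0 ffactnn -scalerMnr alg_polyC polyCMn.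
move=> i /= Hik; rewrite iterDpXn.
have [ik|ki] := ltnP i k; first by rewrite Hi // scale0r.
have ki' : (k < i)%N by rewrite ltn_neqAle ki andbT eq_sym; apply: contra Hik => /eqP Hk; apply/eqP/val_inj.
by rewrite ffact_small // mulr0n scaler0.
Qed.

Lemma act_faithful (P : {poly K}) : (forall f, act P f = 0) -> P = 0.
Proof.
move=> H; apply/polyP => k; rewrite coef0.
elim/ltn_ind: k => k IH.
have := H 'X^k; rewrite act_Xk // => /eqP; rewrite polyC_eq0 -mulr_natr mulf_eq0.
by rewrite (negbTE (natr_fact_neq0 k)) orbF => /eqP.
Qed.

Lemma act_inj (P Q : {poly K}) : (forall f, act P f = act Q f) -> P = Q.
Proof.
move=> H; apply/eqP; rewrite -subr_eq0; apply/eqP; apply: act_faithful => f.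
by rewrite act_add act_opp H subrr.
Qed.

Lemma dmulA P Q R : dmul d (dmul d P Q) R = dmul d P (dmul d Q R).
Proof. by apply: act_inj => f; rewrite !act_dmul. Qed.
Lemma dmul1l P : dmul d 1 P = P.
Proof. by apply: act_inj => f; rewrite !act_dmul act1. Qed.
Lemma dmul1r P : dmul d P 1 = P.
Proof. by apply: act_inj => f; rewrite !act_dmul act1. Qed.
Lemma dmulDl P Q R : dmul d (P + Q) R = dmul d P R + dmul d Q R.
Proof. by apply: act_inj => f; rewrite act_add !act_dmul act_add. Qed.
Lemma dmulDr P Q R : dmul d P (Q + R) = dmul d P Q + dmul d P R.
Proof. by apply: act_inj => f; rewrite act_add !act_dmul act_add act_addf. Qed.
Lemma dmulZl c P Q : dmul d (c *: P) Q = c *: dmul d P Q.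
Proof. by apply: act_inj => f; rewrite act_scale !act_dmul act_scale. Qed.
Lemma dmulZr c P Q : d c = 0 -> dmul d P (c *: Q) = c *: dmul d P Q.
Proof. by move=> dc; apply: act_inj => f; rewrite act_scale !act_dmul act_scale act_scalec. Qed.
Lemma dmul0l P : dmul d 0 P = 0.
Proof. by apply: act_inj => f; rewrite act_dmul !act0. Qed.
Lemma dmul0r P : dmul d P 0 = 0.
Proof. by apply: act_inj => f; rewrite act_dmul !act0 /act big1 // => i _; rewrite iterDp0 scaler0. Qed.

Lemma dmulE P Q : dmul d P Q =
  \sum_(i < size P) \sum_(k < i.+1)
     (P`_i *+ 'C(i, k)) *: (map_poly (iter k d) Q * 'X^(i - k)).
Proof.
rewrite /dmul; apply eq_bigr => i _; rewrite exchange_big /=; apply eq_bigr => k _.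
rewrite /map_poly poly_def mulr_suml scaler_sumr; apply eq_bigr => j _.
rewrite -scalerAl -exprD scalerA mulrnAl.
have hk : (k <= i)%N by rewrite -ltnS.
by rewrite [(j + _)%N]addnC addnBAC.
Qed.

Lemma size_sum_le I (r : seq I) (Pr : pred I) (F : I -> {poly K}) N :
  (forall i, Pr i -> (size (F i) <= N)%N) -> (size (\sum_(i <- r | Pr i) F i)%R <= N)%N.
Proof.
move=> H; apply: (big_ind (fun p : {poly K} => (size p <= N)%N)) => //.
  by rewrite size_poly0.
by move=> x y Hx Hy; apply: leq_trans (size_polyD _ _) _; rewrite geq_max Hx Hy.
Qed.

Lemma size_map_iter k Q : (size (map_poly (iter k d) Q) <= size Q)%N.
Proof. apply: size_poly. Qed.

Lemma size_dmul_le P Q : (size (dmul d P Q) <= (size P + size Q).-1)%N.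
Proof.
rewrite dmulE; apply: size_sum_le => i _; apply: size_sum_le => k _.
apply: leq_trans (size_scale_leq _ _) _.
apply: leq_trans (size_polyMleq _ _) _; rewrite size_polyXn.
have := size_map_iter k Q; have := ltn_ord i; have := ltn_ord k.
move=> h1 h2 h3; lia.
Qed.

Lemma dmul_top P Q p q : size P = p.+1 -> size Q = q.+1 ->
  (dmul d P Q)`_(p + q) = lead_coef P * lead_coef Q.
Proof.
move=> hP hQ; rewrite dmulE coef_sum.
rewrite hP big_ord_recr /= big1 ?add0r.
  rewrite coef_sum big_ord_recl /= big1 ?addr0.
    rewrite bin0 mulr1n coefZ subn0 coefMXn ltnNge leq_addr /= addKn.
    by rewrite coef_map_id0 // /lead_coef hP hQ.
  move=> k _; rewrite coefZ coefMXn; case: ifP => _; first by rewrite mulr0.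
  rewrite [X in _ * X]nth_default ?mulr0 //; apply: leq_trans (size_map_iter _ _) _.
  by rewrite hQ /bump /=; have := ltn_ord k; lia.
move=> i _; rewrite coef_sum big1 // => k _; rewrite coefZ coefMXn.
case: ifP => _; first by rewrite mulr0.
rewrite [X in _ * X]nth_default ?mulr0 //; apply: leq_trans (size_map_iter _ _) _.
by rewrite hQ; have hi := ltn_ord i; have hk := ltn_ord k; lia.
Qed.

Lemma size_gt0E P : P != 0 -> exists p, size P = p.+1.
Proof. by rewrite -size_poly_gt0 => h; exists (size P).-1; rewrite prednK. Qed.

Lemma dmul_size_lead P Q : P != 0 -> Q != 0 ->
  size (dmul d P Q) = (size P + size Q).-1 /\
  lead_coef (dmul d P Q) = lead_coef P * lead_coef Q.
Proof.
move=> P0 Q0; have [p hP] := size_gt0E P0; have [q hQ] := size_gt0E Q0.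
have top := dmul_top hP hQ.
have nz : lead_coef P * lead_coef Q != 0 by rewrite mulf_neq0 // lead_coef_eq0.
have hs : size (dmul d P Q) = (p + q).+1.
  apply/eqP; rewrite eqn_leq; apply/andP; split.
    by have := size_dmul_le P Q; rewrite hP hQ addSn addnS.
  rewrite ltnNge; apply/negP => h; move: nz; rewrite -top nth_default //.
  by rewrite eqxx.
split; first by rewrite hs hP hQ addSn addnS.
by rewrite /lead_coef hs /= top.
Qed.

Lemma dmul_eq0 P Q : dmul d P Q = 0 -> P = 0 \/ Q = 0.
Proof.
move=> h; have [->|P0] := eqVneq P 0; first by left.
have [->|Q0] := eqVneq Q 0; first by right.
have [_ hl] := dmul_size_lead P0 Q0; move: hl; rewrite h lead_coef0 => /esym/eqP.
by rewrite mulf_eq0 !lead_coef_eq0 (negbTE P0) (negbTE Q0).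
Qed.

Lemma iterd_nat k m : iter k.+1 d (m%:R) = 0.
Proof. elim: k => [|k IH]; first exact: dnat. by rewrite iterS IH d0. Qed.

Lemma map_iter0 A : map_poly (iter 0 d) A = A.
Proof. by apply/polyP => i; rewrite coef_map_id0. Qed.

Lemma map_iterXn k e : map_poly (iter k.+1 d) 'X^e = 0.
Proof. by apply/polyP => i; rewrite coef_map_id0 ?iterd0 // coefXn iterd_nat coef0. Qed.

Lemma dmul_Xnr A e : dmul d A 'X^e = A * 'X^e.
Proof.
have -> : A * 'X^e = \sum_(i < size A) A`_i *: ('X^e * 'X^i).
  rewrite -[in LHS](coefK A) poly_def mulr_suml; apply eq_bigr => i _.
  by rewrite -scalerAl mulrC.
rewrite dmulE; apply eq_bigr => i _.
rewrite big_ord_recl /= big1 ?addr0.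
  by rewrite bin0 mulr1n map_iter0 subn0.
by move=> k _; rewrite /bump /= add1n map_iterXn mul0r scaler0.
Qed.

Lemma dmul_Xnl A e : dmul d 'X^e A =
  \sum_(k < e.+1) ('C(e, k))%:R *: (map_poly (iter k d) A * 'X^(e - k)).
Proof.
rewrite dmulE size_polyXn big_ord_recr /= big1 ?add0r.
  by apply eq_bigr => k _; rewrite coefXn eqxx.
by move=> i _; rewrite big1 // => k _; rewrite coefXn ltn_eqF // mul0rn scale0r.
Qed.


Lemma comm_Xn_coef A e m : size A = m.+1 ->
  (dmul d 'X^(e.+1) A - dmul d A 'X^(e.+1))`_(e + m) = d A`_m *+ e.+1.
Proof.
move=> hA; rewrite dmul_Xnl dmul_Xnr big_ord_recl /= bin0 map_iter0 subn0 scale1r.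
rewrite addrAC subrr add0r coef_sum big_ord_recl /= big1 ?addr0.
  rewrite /bump /= add1n bin1 coefZ coefMXn subSS subn0 ltnNge leq_addr /= addKn.
  by rewrite coef_map_id0 ?iterd0 // mulr_natl.
move=> k _; rewrite coefZ coefMXn; case: ifP => _; first by rewrite mulr0.
rewrite nth_default ?mulr0 //; apply: leq_trans (size_map_iter _ _) _.
by rewrite hA /bump /=; have := ltn_ord k; lia.
Qed.

Lemma centr_lead_const n L A : (0 < n)%N -> normal_form n L ->
  in_centralizer d L A -> A != 0 -> d (lead_coef A) = 0.
Proof.
move=> n0 [sL [lL cL]] hc A0; have [m hA] := size_gt0E A0.
case: n n0 sL lL cL => // e _ sL lL cL.
set L1 := L - 'X^(e.+1).
have sL1 : (size L1 <= e)%N.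
  apply/leq_sizeP => j hj; rewrite coefB coefXn.
  have [->|] := eqVneq j e; first by rewrite cL ltn_eqF // subr0.
  move=> je; have hj' : (e < j)%N by rewrite ltn_neqAle eq_sym je.
  have [->|] := eqVneq j e.+1.
    by rewrite ?eqxx -lL /lead_coef sL subrr.
  by move=> j1; rewrite ?(negbTE j1) ?subr0 nth_default // ?subr0 // sL; lia.
have hL : L = 'X^(e.+1) + L1 by rewrite /L1 addrC subrK.
have h0 : (dmul d L A - dmul d A L)`_(e + m) = 0 by rewrite hc subrr coef0.
move: h0; rewrite hL dmulDl dmulDr.
rewrite (_ : forall a b c f : {poly K}, a + b - (c + f) = (a - c) + (b - f)); last first.
  by move=> a b c f; rewrite opprD addrACA.
rewrite coefD comm_Xn_coef // coefB.
rewrite [X in _ + (X - _)]nth_default; last first.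
  by apply: leq_trans (size_dmul_le _ _) _; rewrite hA; lia.
rewrite [X in _ + (_ - X)]nth_default; last first.
  by apply: leq_trans (size_dmul_le _ _) _; rewrite hA; lia.
rewrite subr0 addr0 => /eqP; rewrite -mulr_natr mulf_eq0 (negbTE (Hc e)) orbF.
by rewrite /lead_coef hA => /eqP.
Qed.

End Ops.

Section Schur.
Variable (K : fieldType) (d : K -> K).
Hypothesis Hd : is_derivation d.
Hypothesis Hc : char_zero K.
Variables (n : nat) (L : {poly K}) (t : nat) (G : nat -> {poly K}).
Hypothesis n0 : (0 < n)%N.
Hypothesis hL : normal_form n L.
Hypothesis hG : goodearl_basis d n L t G.
Implicit Types (P Q R A B X Y Z : {poly K}).

Local Notation "x ** y" := (dmul d x y) (at level 40, left associativity).
Local Notation Cz := (in_centralizer d L).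

Let mA := dmulA Hd Hc.
Let m1l := dmul1l Hd Hc.
Let m1r := dmul1r Hd Hc.
Let mDl := dmulDl Hd Hc.
Let mDr := dmulDr Hd Hc.
Let mZl := dmulZl Hd Hc.
Let mZr := dmulZr Hd Hc.
Let m0l := dmul0l Hd Hc.
Let m0r := dmul0r Hd Hc.
Let dN' := dN Hd.
Let d1' := d1 Hd.
Let d0' := d0 Hd.
Let dnat' := dnat Hd.

Lemma mNl P Q : (- P) ** Q = - (P ** Q).
Proof. by rewrite -scaleN1r mZl scaleN1r. Qed.
Lemma mNr P Q : P ** (- Q) = - (P ** Q).
Proof. by rewrite -scaleN1r mZr ?scaleN1r // dN' d1' oppr0. Qed.
Lemma mBl P Q R : (P - Q) ** R = P ** R - Q ** R.
Proof. by rewrite mDl mNl. Qed.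
Lemma mBr P Q R : P ** (Q - R) = P ** Q - P ** R.
Proof. by rewrite mDr mNr. Qed.

Lemma CzM A B : Cz A -> Cz B -> Cz (A ** B).
Proof. rewrite /in_centralizer => hA hB; by rewrite -mA hA mA hB -mA. Qed.
Lemma CzD A B : Cz A -> Cz B -> Cz (A + B).
Proof. rewrite /in_centralizer => hA hB; by rewrite mDl mDr hA hB. Qed.
Lemma CzN A : Cz A -> Cz (- A).
Proof. rewrite /in_centralizer => hA; by rewrite mNl mNr hA. Qed.
Lemma CzB A B : Cz A -> Cz B -> Cz (A - B).
Proof. by move=> hA hB; apply: CzD => //; apply: CzN. Qed.
Lemma Cz0 : Cz 0.
Proof. by rewrite /in_centralizer m0l m0r. Qed.
Lemma Cz1 : Cz 1.
Proof. by rewrite /in_centralizer m1l m1r. Qed.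
Lemma CzL : Cz L.
Proof. by []. Qed.
Lemma CzZ c A : d c = 0 -> Cz A -> Cz (c *: A).
Proof. rewrite /in_centralizer => dc hA; by rewrite mZr // mZl hA. Qed.

Lemma dpowS A k : dpow d A k.+1 = A ** dpow d A k.
Proof. by []. Qed.
Lemma dpow0 A : dpow d A 0 = 1.
Proof. by []. Qed.
Lemma CzX A k : Cz A -> Cz (dpow d A k).
Proof. by move=> hA; elim: k => [|k IH]; [exact: Cz1 | rewrite dpowS; apply: CzM]. Qed.
Lemma dpowD A a b : dpow d A (a + b) = dpow d A a ** dpow d A b.
Proof. elim: a => [|a IH]; first by rewrite dpow0 m1l. by rewrite addSn !dpowS IH mA. Qed.

Definition commute2 X Y := X ** Y = Y ** X.
Lemma commM X A B : commute2 X A -> commute2 X B -> commute2 X (A ** B).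
Proof. rewrite /commute2 => hA hB; by rewrite -mA hA mA hB mA. Qed.
Lemma commD X A B : commute2 X A -> commute2 X B -> commute2 X (A + B).
Proof. rewrite /commute2 => hA hB; by rewrite mDl mDr hA hB. Qed.
Lemma commZ X c A : d c = 0 -> commute2 X A -> commute2 X (c *: A).
Proof. rewrite /commute2 => dc hA; by rewrite mZr // mZl hA. Qed.
Lemma comm1 X : commute2 X 1.
Proof. by rewrite /commute2 m1l m1r. Qed.
Lemma comm0 X : commute2 X 0.
Proof. by rewrite /commute2 m0l m0r. Qed.
Lemma commX X A k : commute2 X A -> commute2 X (dpow d A k).
Proof. move=> h; elim: k => [|k IH]; [exact: comm1 | rewrite dpowS; exact: commM]. Qed.
Lemma commC X Y : commute2 X Y -> commute2 Y X.
Proof. by rewrite /commute2. Qed.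

Lemma dpow_size A k : A != 0 ->
  [/\ dpow d A k != 0, size (dpow d A k) = (k * (size A).-1).+1 &
      lead_coef (dpow d A k) = lead_coef A ^+ k].
Proof.
move=> A0; elim: k => [|k [IH1 IH2 IH3]].
  by rewrite dpow0 oner_neq0 size_poly1 lead_coef1 expr0.
have [s l] := dmul_size_lead d A0 IH1.
have [a sA] := size_gt0E A0.
rewrite dpowS s l IH2 IH3 exprS; split => //.
  by rewrite -size_poly_eq0 s IH2 sA /=; lia.
by rewrite sA /=; lia.
Qed.

Lemma mul_size A B : A != 0 -> B != 0 ->
  [/\ A ** B != 0, size (A ** B) = (size A + size B).-1 &
      lead_coef (A ** B) = lead_coef A * lead_coef B].
Proof.
move=> A0 B0; have [s l] := dmul_size_lead d A0 B0; split => //.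
have [a sA] := size_gt0E A0; have [b sB] := size_gt0E B0.
by rewrite -size_poly_eq0 s sA sB /=; lia.
Qed.

Lemma L_neq0 : L != 0.
Proof. by case: hL => sL _; rewrite -size_poly_eq0 sL. Qed.
Lemma L_size : size L = n.+1.
Proof. by case: hL. Qed.
Lemma L_lead : lead_coef L = 1.
Proof. by case: hL => _ []. Qed.

Lemma G_prop i : (i < t)%N -> Cz (G i) /\ G i != 0.
Proof.
case: hG => t0 [G0 [GC [Gind _]]] it; split; first exact: GC.
apply/negP => /eqP Gi0.
pose q j : {poly K} := if j == i then 1 else 0.
have cq : forall j, (j < t)%N -> const_poly d (q j).
  move=> j _ k; rewrite /q /is_const; case: (j == i).
    by rewrite coef1 dnat'.
  by rewrite coef0 d0'.
have := Gind q cq; rewrite big1; last first.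
  move=> j _; rewrite /q; case: eqP => [->|_]; first by rewrite Gi0 m0r.
  by rewrite /poly_in_L size_poly0 big_ord0 m0l.
move=> /(_ erefl i it); rewrite /q eqxx => /eqP; by rewrite oner_eq0.
Qed.

Lemma exists_gen : exists P, [/\ Cz P, P != 0 &
  forall X, Cz X -> X != 0 ->
    exists2 k, (k < n)%N & ((size X).-1 = k * (size P).-1 %[mod n])%N].
Proof.
case: hG => t0 [G0 [GC [_ [_ [_ [_ Gex]]]]]].
pose hPr h := (0 < h)%N && [exists j : 'I_t, ord_op (G j) == h %[mod n]].
have exh : exists h, hPr h.
  exists n; rewrite /hPr n0 /=; apply/existsP; exists (Ordinal t0).
  by rewrite /= G0 /ord_op size_poly1 mod0n modnn.
case: (ex_minnP exh) => h /andP [h0 /existsP [j0 hj0]] hmin.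
have [Cj Gj] := G_prop (ltn_ord j0).
exists (G j0); split => // X CX X0.
move: hj0; rewrite /ord_op; set p := (size (G j0)).-1 => /eqP hp.
set oX := (size X).-1. set r := (oX %% n)%N. set q := (r %/ h)%N. set rho := (r %% h)%N.
have hr : r = (q * h + rho)%N := divn_eq r h.
have rho0 : rho = 0%N.
  have [//|rh] := posnP rho.
  have [Pw0 sPw _] := dpow_size (n.-1 * q) Gj.
  have [Y0 sY _] := mul_size X0 Pw0.
  have CY : Cz (X ** dpow d (G j0) (n.-1 * q)) by apply: CzM => //; apply: CzX.
  have [j hj hjY] := Gex _ CY Y0.
  have : hPr rho.
    rewrite /hPr rh /=; apply/existsP; exists (Ordinal hj); rewrite /= -hjY.
    rewrite /ord_op sY sPw.
    have [x sX] := size_gt0E X0.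
    have -> : ((size X + (n.-1 * q * p).+1).-1.-1 = oX + n.-1 * q * p)%N.
      by rewrite /oX sX addnS /=.
    rewrite -modnDml -/r -modnDmr -modnMmr hp modnMmr modnDmr hr.
    have -> : (q * h + rho + n.-1 * q * h = (q * h) * n + rho)%N.
      have hn : n = n.-1.+1 by rewrite prednK.
      move: (n.-1) hn => n' ->; rewrite mulnS; nia.
    by rewrite modnMDl.
  move/hmin => hle; have := ltn_pmod r h0; rewrite -/rho; lia.
exists q.
  have := ltn_pmod oX n0; have := leq_div r h; rewrite -/r -/q; lia.
rewrite -modnMmr hp modnMmr -/r.
have -> : (q * h = r)%N by rewrite hr rho0 addn0.
by rewrite modn_mod.
Qed.

Lemma d_exp_const x k : d x = 0 -> d (x ^+ k) = 0.
Proof. move=> dx; elim: k => [|k IH]; first by rewrite expr0 d1'. by rewrite exprS dconstM. Qed.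

Lemma size_sub_lt X Y : X != 0 -> size X = size Y -> lead_coef X = lead_coef Y ->
  (size (X - Y)%R < size X)%N.
Proof.
move=> X0 sXY lXY; have [x sX] := size_gt0E X0.
rewrite sX ltnS; apply/leq_sizeP => j hj; rewrite coefB.
have [->|jx] := eqVneq j x.
  by move: lXY; rewrite /lead_coef -sXY sX /= => ->; rewrite subrr.
rewrite !nth_default ?subrr // -?sXY sX; lia.
Qed.

Lemma size_subB A B : (size (A - B)%R <= maxn (size A) (size B))%N.
Proof. by apply: leq_trans (size_polyD _ _) _; rewrite size_polyN. Qed.

Section WithP.
Variable P : {poly K}.
Hypothesis hPC : Cz P.
Hypothesis hP0 : P != 0.
Hypothesis hPres : forall X, Cz X -> X != 0 ->
    exists2 k, (k < n)%N & ((size X).-1 = k * (size P).-1 %[mod n])%N.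

Inductive Tsp : {poly K} -> Prop :=
  | Tsp0 : Tsp 0
  | TspD Q1 Q2 : Tsp Q1 -> Tsp Q2 -> Tsp (Q1 + Q2)
  | TspM c a k : d c = 0 -> Tsp (c *: (dpow d L a ** dpow d P k)).

Lemma Tsp_comm Y : commute2 Y L -> commute2 Y P -> forall Q, Tsp Q -> commute2 Y Q.
Proof.
move=> YL YP Q; elim => [|Q1 Q2 _ h1 _ h2|c a k dc]; first exact: comm0.
  exact: commD.
by apply: commZ => //; apply: commM; apply: commX.
Qed.

Lemma approx X : Cz X -> exists Q, Tsp Q /\ (size (X - Q)%R <= n * (size P).-1)%N.
Proof.
set p := (size P).-1; set tau := (n * p)%N.
have: forall m X, size X = m -> Cz X -> exists Q, Tsp Q /\ (size (X - Q)%R <= tau)%N;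
  last by move=> H CX; exact: (H _ X erefl CX).
elim/ltn_ind => m IH {}X sX CX.
case: (leqP (size X) tau) => hs.
  by exists 0; split; [exact: Tsp0 | rewrite subr0].
have X0 : X != 0 by rewrite -size_poly_eq0; lia.
have [k kn hk] := hPres CX X0.
set oX := (size X).-1 in hk.
have hkp : (k * p <= oX)%N by have := leq_mul (ltnW kn) (leqnn p); rewrite /oX; lia.
have hdv : (n %| oX - k * p)%N by rewrite -eqn_mod_dvd // hk.
set a := ((oX - k * p) %/ n)%N.
have ha : (a * n = oX - k * p)%N by rewrite divnK.
have [La sLa lLa] := dpow_size a L_neq0.
have [Pk sPk lPk] := dpow_size k hP0.
have [M0 sM lM] := mul_size La Pk.
set M := dpow d L a ** dpow d P k in M0 sM lM.
rewrite sLa sPk L_size /= -/p in sM.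
rewrite lLa lPk L_lead expr1n mul1r in lM.
have sMX : size M = size X by rewrite sM; have [x sx] := size_gt0E X0; rewrite /oX sx /= in ha *; lia.
have dlP : d (lead_coef P) = 0 by apply: (centr_lead_const Hd Hc n0 hL).
have dlX : d (lead_coef X) = 0 by apply: (centr_lead_const Hd Hc n0 hL).
have lM0 : lead_coef M != 0 by rewrite lead_coef_eq0.
have lX0 : lead_coef X != 0 by rewrite lead_coef_eq0.
set c := lead_coef X / lead_coef M.
have dc : d c = 0.
  by rewrite /c dconstM // (dV Hd) // lM d_exp_const.
have c0 : c != 0 by rewrite /c mulf_neq0 // invr_eq0.
have CM : Cz M by apply: CzM; apply: CzX => //; exact: CzL.
have CX' : Cz (X - c *: M) by apply: CzB => //; apply: CzZ.
have sX' : (size (X - c *: M)%R < m)%N.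
  rewrite -sX; apply: size_sub_lt => //; first by rewrite size_scale.
  by rewrite lead_coefZ /c divfK.
have [Q' [TQ' hQ']] := IH _ sX' _ erefl CX'.
exists (Q' + c *: M); split; first by apply: TspD => //; exact: TspM.
by rewrite opprD addrA addrAC.
Qed.

Lemma comm_all Y : Cz Y -> commute2 Y P -> forall B, Cz B -> commute2 B Y.
Proof.
move=> CY YP B CB; rewrite /commute2; apply/eqP; rewrite -subr_eq0; apply/eqP.
set D := B ** Y - Y ** B.
set p := (size P).-1; set tau := (n * p)%N.
set N := (tau + size Y)%N.
have CZ : Cz (dpow d L N ** B) by apply: CzM => //; apply: CzX; exact: CzL.
have [Q [TQ hs]] := approx CZ.
have YL : commute2 Y L by exact: commC.
have YLN : commute2 Y (dpow d L N) by exact: commX.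
have YQ := Tsp_comm YL YP TQ.
have key : dpow d L N ** D = (dpow d L N ** B - Q) ** Y - Y ** (dpow d L N ** B - Q).
  rewrite mBl mBr YQ opprB addrA subrK /D mBr mA -[Y ** (_ ** B)]mA YLN mA.
  done.
have [//|D0] := eqVneq D 0; exfalso.
have [LN0 sLN _] := dpow_size N L_neq0.
have [_ s1 _] := mul_size LN0 D0.
have : (size ((dpow d L N ** B - Q) ** Y - Y ** (dpow d L N ** B - Q))%R <= (tau + size Y).-1)%N.
  apply: leq_trans (size_subB _ _) _; rewrite geq_max; apply/andP; split.
    apply: leq_trans (size_dmul_le _ _ _) _; lia.
  apply: leq_trans (size_dmul_le _ _ _) _; lia.
rewrite -key s1 sLN L_size /=.
have [dd sD] := size_gt0E D0; rewrite sD.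
have := leq_pmulr N n0; rewrite /N; move: (N * n)%N (tau + size Y)%N => u w; lia.
Qed.

End WithP.

Theorem schur A B : Cz A -> Cz B -> A ** B = B ** A.
Proof.
move=> CA CB.
have [P [CP P0 Pres]] := exists_gen.
have step1 : forall X, Cz X -> commute2 X P.
  by move=> X CX; apply: (comm_all CP P0 Pres CP (erefl _) CX).
have AP := step1 A CA.
exact: esym (comm_all CP P0 Pres CA AP CB).
Qed.

End Schur.

Section Main.
Variable (K : fieldType) (d : K -> K).
Hypothesis Hd : is_derivation d.
Hypothesis Hc : char_zero K.
Variables (n : nat) (L : {poly K}) (t : nat) (G : nat -> {poly K}).
Hypothesis n0 : (0 < n)%N.
Hypothesis hL : normal_form n L.
Hypothesis hG : goodearl_basis d n L t G.
Implicit Types (P Q R A B X Y Z : {poly K}) (p q r F : {mpoly K[t]}).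

Local Notation "x ** y" := (dmul d x y) (at level 40, left associativity).
Local Notation Cz := (in_centralizer d L).

Let mA := dmulA Hd Hc.
Let m1l := dmul1l Hd Hc.
Let m1r := dmul1r Hd Hc.
Let mDl := dmulDl Hd Hc.
Let mDr := dmulDr Hd Hc.
Let mZl := dmulZl Hd Hc.
Let mZr := dmulZr Hd Hc.
Let m0l := dmul0l Hd Hc.
Let m0r := dmul0r Hd Hc.
Let d0' := d0 Hd.
Let d1' := d1 Hd.
Let dnat' := dnat Hd.
Let sch := schur Hd Hc n0 hL hG.
Let CzM' := CzM Hd Hc (L := L).
Let CzX' := CzX Hd Hc (L := L).
Let CzL' := CzL d L.
Let Cz1' := Cz1 Hd Hc L.

Lemma mul_suml I (rr : seq I) (Pr : pred I) (F : I -> {poly K}) R :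
  (\sum_(i <- rr | Pr i) F i) ** R = \sum_(i <- rr | Pr i) (F i ** R).
Proof. exact: (big_morph (fun X => X ** R) (fun X Y => mDl X Y R) (m0l R)). Qed.
Lemma mul_sumr I (rr : seq I) (Pr : pred I) (F : I -> {poly K}) R :
  R ** (\sum_(i <- rr | Pr i) F i) = \sum_(i <- rr | Pr i) (R ** F i).
Proof. exact: (big_morph (fun X => R ** X) (fun X Y => mDr R X Y) (m0r R)). Qed.

Definition Pi (m : 'X_{1..t}) : {poly K} :=
  \big[dmul d/1]_(i < t) dpow d (bc_var L G i) (m i).

Lemma bc_Cz (i : 'I_t) : Cz (bc_var L G i).
Proof.
rewrite /bc_var; case: ifP => _; first exact: CzL'.
by have [] := G_prop Hd Hc hG (ltn_ord i).
Qed.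

Lemma Pi_Cz m : Cz (Pi m).
Proof.
apply: (big_ind (fun X => Cz X)); first exact: Cz1'.
  by move=> X Y; apply: CzM'.
by move=> i _; apply: CzX'; apply: bc_Cz.
Qed.

Lemma big_mul_split (F1 F2 : 'I_t -> {poly K}) :
  (forall i, Cz (F1 i)) -> (forall i, Cz (F2 i)) ->
  \big[dmul d/1]_(i < t) (F1 i ** F2 i) =
  (\big[dmul d/1]_(i < t) F1 i) ** (\big[dmul d/1]_(i < t) F2 i).
Proof.
move=> C1 C2.
pose KK (y1 y2 y3 : {poly K}) := y1 = y2 ** y3 /\ Cz y2 /\ Cz y3.
have : KK (\big[dmul d/1]_(i < t) (F1 i ** F2 i))
          (\big[dmul d/1]_(i < t) F1 i) (\big[dmul d/1]_(i < t) F2 i);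
  last by case.
apply: (big_rec3 KK); first by split; [rewrite m1l | split; exact: Cz1'].
move=> i y1 y2 y3 _ [-> [c2 c3]]; split; last by split; apply: CzM'.
rewrite !mA; congr (_ ** _); rewrite -!mA; congr (_ ** _).
exact: sch.
Qed.

Lemma Pi_add m1 m2 : Pi (m1 + m2)%MM = Pi m1 ** Pi m2.
Proof.
rewrite /Pi -big_mul_split; last 2 first.
- by move=> i; apply: CzX'; apply: bc_Cz.
- by move=> i; apply: CzX'; apply: bc_Cz.
by apply: eq_bigr => i _; rewrite mnmDE dpowD.
Qed.

Lemma big_one_only k (F : 'I_k -> {poly K}) (i : 'I_k) :
  (forall j, j != i -> F j = 1) -> \big[dmul d/1]_(j < k) F j = F i.
Proof.
elim: k F i => [|k IH] F i H; first by case: i H.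
rewrite big_ord_recl /=.
have lne : forall j : 'I_k, lift ord0 j != ord0 by move=> j; apply/eqP => /(congr1 val).
have [ei|ne] := eqVneq i ord0.
  rewrite (_ : \big[dmul d/1]_(j < k) F (lift ord0 j) = 1) ?m1r; last first.
    apply: (big_ind (fun x => x = 1)) => //; first by move=> x y -> ->; rewrite m1l.
    by move=> j _; apply: H; rewrite ei.
  by rewrite ei.
have ik : (i.-1 < k)%N.
  by move: (ltn_ord i) ne; rewrite -(inj_eq val_inj) /=; case: (val i).
have hi : lift ord0 (Ordinal ik) = i.
  apply: val_inj => /=; rewrite /bump /= add1n prednK //.
  by move: ne; rewrite -(inj_eq val_inj) /= lt0n.
rewrite (IH _ (Ordinal ik)).
  by rewrite H ?m1l ?hi // eq_sym.
move=> j hj; apply: H; rewrite -hi; apply: contra hj => /eqP hj; apply/eqP.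
exact: lift_inj hj.
Qed.

Local Notation phi := (@phiL K d L t G).

Lemma phiE p : phi p = \sum_(m <- msupp p) p@_m *: Pi m.
Proof. by []. Qed.

Lemma phi_over p (s : seq 'X_{1..t}) : uniq s -> {subset msupp p <= s} ->
  phi p = \sum_(m <- s) p@_m *: Pi m.
Proof.
move=> us sub; rewrite phiE [RHS](bigID (fun m => m \in msupp p)) /=.
rewrite [X in _ = _ + X]big1 ?addr0; last by move=> m /memN_msupp_eq0 ->; rewrite scale0r.
rewrite -[RHS]big_filter.
have H : perm_eq (msupp p) [seq m <- s | m \in msupp p].
  apply: uniq_perm; first exact: msupp_uniq.
    exact: filter_uniq.
  by move=> m; rewrite mem_filter; case h: (m \in msupp p) => //=; rewrite sub.
by rewrite (perm_big _ H).
Qed.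

Lemma phi0 : phi 0 = 0.
Proof. by rewrite phiE msupp0 big_nil. Qed.

Lemma phiD p q : phi (p + q) = phi p + phi q.
Proof.
set s := undup (msupp p ++ msupp q).
have us : uniq s by apply: undup_uniq.
rewrite (@phi_over p s us); last by move=> m h; rewrite mem_undup mem_cat h.
rewrite (@phi_over q s us); last by move=> m h; rewrite mem_undup mem_cat h orbT.
rewrite (@phi_over (p + q) s us); last by move=> m /msuppD_le; rewrite mem_undup.
by rewrite -big_split; apply: eq_bigr => m _; rewrite mcoeffD scalerDl.
Qed.

Lemma phiZ c p : phi (c *: p) = c *: phi p.
Proof.
rewrite (@phi_over (c *: p) (msupp p) (msupp_uniq p)); last exact: msuppZ_le.
by rewrite phiE scaler_sumr; apply: eq_bigr => m _; rewrite mcoeffZ scalerA.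
Qed.

Lemma phiN p : phi (- p) = - phi p.
Proof. by rewrite -scaleN1r phiZ scaleN1r. Qed.
Lemma phiB p q : phi (p - q) = phi p - phi q.
Proof. by rewrite phiD phiN. Qed.

Lemma phi_sum I (rr : seq I) (Pr : pred I) (Fs : I -> {mpoly K[t]}) :
  phi (\sum_(i <- rr | Pr i) Fs i) = \sum_(i <- rr | Pr i) phi (Fs i).
Proof. exact: (big_morph phi phiD phi0). Qed.

Lemma phiX m : phi 'X_[m] = Pi m.
Proof. by rewrite phiE msuppX big_seq1 mcoeffX eqxx scale1r. Qed.

Lemma Pi0 : Pi 0%MM = 1.
Proof.
apply: (big_ind (fun x => x = 1)) => //; first by move=> x y -> ->; rewrite m1l.
by move=> i _; rewrite mnm0E.
Qed.

Lemma phi1 : phi 1 = 1.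
Proof. by rewrite -mpolyX0 phiX Pi0. Qed.

Lemma phiXM m F : phi ('X_[m] * F) = phi F ** Pi m.
Proof.
rewrite {1}(mpolyE F) mulr_sumr phi_sum [in RHS]phiE mul_suml; apply: eq_bigr => u _.
by rewrite -scalerAr -mpolyXD phiZ phiX mZl addmC Pi_add.
Qed.

Lemma phiM0 r F : phi F = 0 -> phi (r * F) = 0.
Proof.
move=> hF; rewrite (mpolyE r) mulr_suml phi_sum big1 // => m _.
by rewrite -scalerAl phiZ phiXM hF m0l scaler0.
Qed.

Lemma mderivK_coef F m : (@mderivK K d t F)@_m = d (F@_m).
Proof.
rewrite /mderivK raddf_sum /=.
case: (boolP (m \in msupp F)) => hm.
  rewrite (bigD1_seq m hm (msupp_uniq F)) /= mcoeffZ mcoeffX eqxx mulr1 big1 ?addr0 //.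
  by move=> u hu; rewrite mcoeffZ mcoeffX (negbTE hu) mulr0.
rewrite memN_msupp_eq0 // d0' big_seq big1 // => u hu.
rewrite mcoeffZ mcoeffX; case: eqP => [eu|_]; last by rewrite mulr0.
by move: hm; rewrite -eu hu.
Qed.

Lemma mderivK_add F1 F2 : @mderivK K d t (F1 + F2) = @mderivK K d t F1 + @mderivK K d t F2.
Proof. by apply/mpolyP => m; rewrite mcoeffD !mderivK_coef mcoeffD dD. Qed.
Lemma mderivK_scale c F : @mderivK K d t (c *: F) = d c *: F + c *: @mderivK K d t F.
Proof. by apply/mpolyP => m; rewrite mcoeffD !mcoeffZ !mderivK_coef mcoeffZ dM. Qed.
Lemma mderivK_X m : @mderivK K d t 'X_[m] = 0.
Proof. by apply/mpolyP => u; rewrite mderivK_coef mcoeffX dnat' mcoeff0. Qed.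

Lemma sum_ext (V : lmodType K) (b : {poly K}) (T : nat -> V) N :
  (size b <= N)%N -> \sum_(k < size b) b`_k *: T k = \sum_(k < N) b`_k *: T k.
Proof.
move=> HN; rewrite (big_ord_widen N (fun k => b`_k *: T k)) //.
rewrite big_mkcond; apply eq_bigr => i _; case: ifP => // /negbT; rewrite -leqNgt => H.
by rewrite nth_default // scale0r.
Qed.

Definition Psi A (b : nat -> {poly K}) : {poly K} :=
  \sum_(s < t) \sum_(k < size (b s)) (b s)`_k *: (A ** (dpow d L k ** G s)).

Lemma PsiD A b b' : Psi A (fun s => b s + b' s) = Psi A b + Psi A b'.
Proof.
rewrite /Psi -big_split; apply: eq_bigr => s _ /=.
set N := maxn (size (b s)) (size (b' s)).
rewrite (@sum_ext _ (b s + b' s) (fun k => A ** (dpow d L k ** G s)) N) ?(leq_trans (size_polyD _ _)) //.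
rewrite (@sum_ext _ (b s) (fun k => A ** (dpow d L k ** G s)) N) ?leq_maxl // (@sum_ext _ (b' s) (fun k => A ** (dpow d L k ** G s)) N) ?leq_maxr //.
by rewrite -big_split; apply: eq_bigr => k _; rewrite coefD scalerDl.
Qed.

Lemma PsiZ A c b : Psi A (fun s => c *: b s) = c *: Psi A b.
Proof.
rewrite /Psi scaler_sumr; apply: eq_bigr => s _ /=.
rewrite (@sum_ext _ (c *: b s) (fun k => A ** (dpow d L k ** G s)) (size (b s))) ?size_scale_leq // scaler_sumr.
by apply: eq_bigr => k _; rewrite coefZ scalerA.
Qed.

Lemma Psi_zero A b : (forall s, (s < t)%N -> b s = 0) -> Psi A b = 0.
Proof. by move=> H; rewrite /Psi big1 // => s _; rewrite H // size_poly0 big_ord0. Qed.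

Lemma Psi1 (q : nat -> {poly K}) : Psi 1 q = \sum_(s < t) poly_in_L d L (q s) ** G s.
Proof.
rewrite /Psi; apply: eq_bigr => s _; rewrite /poly_in_L mul_suml.
by apply: eq_bigr => k _; rewrite mZl m1l.
Qed.

Lemma map_dZ c (b : {poly K}) : map_poly d (c *: b) = d c *: b + c *: map_poly d b.
Proof. by apply/polyP => k; rewrite coefD !coefZ !coef_map_id0 // coefZ dM. Qed.
Lemma map_dD (b b' : {poly K}) : map_poly d (b + b') = map_poly d b + map_poly d b'.
Proof. by apply/polyP => k; rewrite coefD !coef_map_id0 // coefD dD. Qed.
Lemma map_d0 : map_poly d (0 : {poly K}) = 0.
Proof. by rewrite map_poly0. Qed.

Let t0 : (0 < t)%N := proj1 hG.
Let i0 : 'I_t := Ordinal t0.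

Definition em k (s : 'I_t) : 'X_{1..t} :=
  (U_(i0) *+ k + (if val s == 0%N then 0 else U_(s)))%MM.

Definition Ebig (b : nat -> {poly K}) : {mpoly K[t]} :=
  \sum_(s < t) \sum_(k < size (b s)) (b s)`_k *: 'X_[em k s].

Lemma Pi_em k s : Pi (em k s) = dpow d L k ** G s.
Proof.
rewrite /em Pi_add; congr (_ ** _).
  rewrite /Pi (@big_one_only t _ i0).
    by rewrite mulmnE mnm1E eqxx mul1n /bc_var /=.
  by move=> j hj; rewrite mulmnE mnm1E eq_sym (negbTE hj) mul0n.
case: eqP => [s0|s0].
  have -> : G s = 1 by rewrite s0; case: hG => _ [].
  exact: Pi0.
rewrite /Pi (@big_one_only t _ s).
  by rewrite mnm1E eqxx /bc_var; case: eqP => // _; rewrite dpowS dpow0 m1r.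
by move=> j hj; rewrite mnm1E eq_sym (negbTE hj).
Qed.

Lemma phi_Ebig b : phi (Ebig b) = Psi 1 b.
Proof.
rewrite /Ebig phi_sum; apply: eq_bigr => s _; rewrite phi_sum; apply: eq_bigr => k _.
by rewrite phiZ phiX Pi_em m1l.
Qed.

Lemma EbigD b b' : Ebig (fun s => b s + b' s) = Ebig b + Ebig b'.
Proof.
rewrite /Ebig -big_split; apply: eq_bigr => s _ /=.
set N := maxn (size (b s)) (size (b' s)).
rewrite (@sum_ext _ (b s + b' s) (fun k => 'X_[em k s]) N) ?(leq_trans (size_polyD _ _)) //.
rewrite (@sum_ext _ (b s) (fun k => 'X_[em k s]) N) ?leq_maxl // (@sum_ext _ (b' s) (fun k => 'X_[em k s]) N) ?leq_maxr //.
by rewrite -big_split; apply: eq_bigr => k _; rewrite coefD scalerDl.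
Qed.

Lemma EbigZ c b : Ebig (fun s => c *: b s) = c *: Ebig b.
Proof.
rewrite /Ebig scaler_sumr; apply: eq_bigr => s _ /=.
rewrite (@sum_ext _ (c *: b s) (fun k => 'X_[em k s]) (size (b s))) ?size_scale_leq // scaler_sumr.
by apply: eq_bigr => k _; rewrite coefZ scalerA.
Qed.

Lemma Ebig_zero b : (forall s, (s < t)%N -> b s = 0) -> Ebig b = 0.
Proof. by move=> H; rewrite /Ebig big1 // => s _; rewrite H // size_poly0 big_ord0. Qed.

Lemma Ebig_const b : (forall s, (s < t)%N -> const_poly d (b s)) ->
  forall m, d ((Ebig b)@_m) = 0.
Proof.
move=> H m; rewrite /Ebig raddf_sum dsum //= big1 // => s _.
rewrite raddf_sum dsum //= big1 // => k _.
by rewrite mcoeffZ mcoeffX dconstM // ?dnat' //; apply: H.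
Qed.

Lemma indep_gen (I : finType) (T : I -> {poly K}) (g : I -> K) :
  (forall i, T i != 0) -> injective (fun i => size (T i)) ->
  \sum_i g i *: T i = 0 -> forall i, g i = 0.
Proof.
move=> T0 Tinj hs i1; apply/eqP; apply: contraT => g1.
have [im Sim hmax] := @arg_maxnP I i1 (fun i => g i != 0) (fun i => size (T i)) g1.
set idx := (size (T im)).-1.
have := congr1 (fun p : {poly K} => p`_idx) hs; rewrite coef_sum coef0 (bigD1 im) //= big1 ?addr0.
  rewrite coefZ => /eqP; rewrite mulf_eq0 (negbTE Sim) /=.
  by rewrite -lead_coefE lead_coef_eq0 (negbTE (T0 im)).
move=> i hi; rewrite coefZ; have [->|gi] := eqVneq (g i) 0; first by rewrite mul0r.
rewrite nth_default ?mulr0 //.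
have le := hmax i gi.
have ne : size (T i) <> size (T im) by move=> h; move: hi; rewrite (Tinj _ _ h) eqxx.
have p0 : (0 < size (T im))%N by rewrite size_poly_gt0.
rewrite /idx; move: le ne p0; simpl; lia.
Qed.

Lemma Psi_indep A b : A != 0 -> Psi A b = 0 -> forall s, (s < t)%N -> b s = 0.
Proof.
move=> A0 hP s st.
set N := (\max_(s < t) size (b s))%N.
have hN : forall s : 'I_t, (size (b s) <= N)%N by move=> s'; apply: (leq_bigmax s').
have E : Psi A b = \sum_(i < t) \sum_(j < N) (b i)`_j *: (A ** (dpow d L j ** G i)).
  rewrite /Psi; apply: eq_bigr => s' _.
  exact: (@sum_ext _ (b s') (fun k => A ** (dpow d L k ** G s')) N).
have Gp := fun s : 'I_t => G_prop Hd Hc hG (ltn_ord s).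
have LN := L_neq0 hL.
have T0 : forall x : 'I_t * 'I_N, A ** (dpow d L x.2 ** G x.1) != 0.
  move=> x; have [Lk _ _] := dpow_size d n0 x.2 LN.
  have [Gx0 _ _] := mul_size d n0 Lk (Gp x.1).2.
  by have [] := mul_size d n0 A0 Gx0.
have Tinj : injective (fun x : 'I_t * 'I_N => size (A ** (dpow d L x.2 ** G x.1))).
  move=> [x1 x2] [y1 y2] /=.
  have [Lx sLx _] := dpow_size d n0 x2 LN; have [Ly sLy _] := dpow_size d n0 y2 LN.
  have [Gx0 sGx _] := mul_size d n0 Lx (Gp x1).2.
  have [Gy0 sGy _] := mul_size d n0 Ly (Gp y1).2.
  have [_ sx _] := mul_size d n0 A0 Gx0; have [_ sy _] := mul_size d n0 A0 Gy0.
  rewrite sx sy sGx sGy.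
  rewrite (L_size hL) in sLx sLy.
  have [ax hax] := size_gt0E A0.
  have [gx hgx] := size_gt0E (Gp x1).2; have [gy hgy] := size_gt0E (Gp y1).2.
  rewrite hax hgx hgy sLx sLy /= => h.
  have e1 : (x2 * n + gx = y2 * n + gy)%N by move: h; lia.
  have hm : (gx = gy %[mod n])%N.
    have h2 : ((x2 * n + gx) %% n = (y2 * n + gy) %% n)%N by rewrite e1.
    by rewrite !modnMDl in h2.
  have ex1 : x1 = y1.
    apply: val_inj; case: hG => _ [_ [_ [_ [_ [_ [Gdist _]]]]]].
    by apply: (Gdist _ _ (ltn_ord x1) (ltn_ord y1)); rewrite /ord_op hgx hgy.
  subst y1; have egx : gx = gy by move: hgx; rewrite hgy => [[]].
  subst gy; have : (x2 * n = y2 * n)%N by lia.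
  move/eqP; rewrite eqn_pmul2r // => /eqP e2.
  by congr pair; apply: val_inj.
move: hP; rewrite E pair_bigA => hP'.
have H := indep_gen T0 Tinj hP'.
apply/polyP => k; rewrite coef0.
case: (ltnP k N) => hk.
  exact: (H (Ordinal st, Ordinal hk)).
by rewrite nth_default // (leq_trans (hN (Ordinal st))).
Qed.

Local Notation J := (@diff_ideal_gen K d t (in_BC d L G)).

Lemma J0 : J 0.
Proof. by move=> I [I0 _ _] _ _. Qed.
Lemma JD a b : J a -> J b -> J (a + b).
Proof. move=> ha hb I hI hd hs; case: (hI) => _ Iadd _; apply: Iadd; [exact: ha | exact: hb]. Qed.
Lemma JM r a : J a -> J (r * a).
Proof. move=> ha I hI hd hs; case: (hI) => _ _ Imul; apply: Imul; exact: ha. Qed.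
Lemma JZ c a : J a -> J (c *: a).
Proof. by move=> ha; rewrite -mul_mpolyC; apply: JM. Qed.
Lemma Jbc p : in_BC d L G p -> J p.
Proof. by move=> h I _ _ hs; apply: hs. Qed.
Lemma Jder a : J a -> J (@mderivK K d t a).
Proof. move=> h I hI hd hs; exact: (hd _ (h I hI hd hs)). Qed.

Lemma Psi_eq A b b' : (forall s, b s = b' s) -> Psi A b = Psi A b'.
Proof. by move=> H; rewrite /Psi; apply: eq_bigr => s _; rewrite H. Qed.
Lemma Ebig_eq b b' : (forall s, b s = b' s) -> Ebig b = Ebig b'.
Proof. by move=> H; rewrite /Ebig; apply: eq_bigr => s _; rewrite H. Qed.

Lemma mderivK0 : @mderivK K d t 0 = 0.
Proof. by apply/mpolyP => m; rewrite mderivK_coef !mcoeff0 d0'. Qed.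

Lemma Rep_all a F : exists b : nat -> {poly K},
  [/\ phi F = Psi 1 b, phi (a * F) = Psi (phi a) b,
      phi (@mderivK K d t F) = Psi 1 (fun s => map_poly d (b s)) & J (F - Ebig b)].
Proof.
pose RP F := exists b : nat -> {poly K},
  [/\ phi F = Psi 1 b, phi (a * F) = Psi (phi a) b,
      phi (@mderivK K d t F) = Psi 1 (fun s => map_poly d (b s)) & J (F - Ebig b)].
have R0 : RP 0.
  exists (fun _ => 0); split.
  - by rewrite phi0 Psi_zero.
  - by rewrite mulr0 phi0 Psi_zero.
  - by rewrite mderivK0 phi0 Psi_zero // => s _; rewrite map_poly0.
  - by rewrite Ebig_zero // subr0; exact: J0.
have RD : forall F1 F2, RP F1 -> RP F2 -> RP (F1 + F2).
  move=> F1 F2 [b1 [h1 h2 h3 h4]] [b2 [k1 k2 k3 k4]].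
  exists (fun s => b1 s + b2 s); split.
  - by rewrite phiD h1 k1 PsiD.
  - by rewrite mulrDr phiD h2 k2 PsiD.
  - by rewrite mderivK_add phiD h3 k3 (Psi_eq _ (fun s => map_dD (b1 s) (b2 s))) PsiD.
  - by rewrite EbigD opprD addrACA; apply: JD.
have RZ : forall c F, RP F -> RP (c *: F).
  move=> c F0 [b [h1 h2 h3 h4]].
  exists (fun s => c *: b s); split.
  - by rewrite phiZ h1 PsiZ.
  - by rewrite -scalerAr phiZ h2 PsiZ.
  - rewrite mderivK_scale phiD !phiZ h1 h3 (Psi_eq _ (fun s => map_dZ c (b s))) PsiD !PsiZ.
    done.
  - by rewrite EbigZ -scalerBr; apply: JZ.
have RX : forall u, RP 'X_[u].
  move=> u; case: hG => _ [_ [_ [_ [Ggen _]]]].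
  have [q [cq hq]] := Ggen _ (Pi_Cz u).
  exists q; split.
  - by rewrite phiX Psi1 hq.
  - rewrite mulrC phiXM hq; set A := phi a; rewrite mul_sumr /Psi; apply: eq_bigr => s _.
    have -> : poly_in_L d L (q s) ** G s = \sum_(k < size (q s)) (q s)`_k *: (dpow d L k ** G s).
      by rewrite /poly_in_L mul_suml; apply: eq_bigr => k _; rewrite mZl.
    rewrite mul_sumr; apply: eq_bigr => k _.
    by rewrite mZr //; apply: (cq _ (ltn_ord s)).
  - rewrite mderivK_X phi0 Psi_zero // => s st; apply/polyP => k.
    by rewrite coef_map_id0 // coef0; apply: (cq _ st).
  - apply: Jbc; split.
      by move=> m; rewrite /is_const mcoeffB mcoeffX dB // dnat' Ebig_const // sub0r oppr0.
    by rewrite phiB phiX phi_Ebig Psi1 hq subrr.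
have : RP F; last by [].
rewrite (mpolyE F); apply: (big_ind RP) => //.
by move=> m _; apply: RZ; apply: RX.
Qed.

Lemma main_sec :
  [/\ ~ J 1, (forall a b, J (a * b) -> J a \/ J b) &
      (forall a, J a -> J (@mderivK K d t a))].
Proof.
have Ker_J : forall F, phi F = 0 -> J F.
  move=> F hF; have [b [h1 _ _ h4]] := Rep_all 1 F.
  have bz := Psi_indep (oner_neq0 _) (esym (etrans (esym hF) h1)).
  by rewrite Ebig_zero // subr0 in h4.
have Ker_der : forall F, phi F = 0 -> phi (@mderivK K d t F) = 0.
  move=> F hF; have [b [h1 _ h3 _]] := Rep_all 1 F.
  have bz := Psi_indep (oner_neq0 _) (esym (etrans (esym hF) h1)).
  by rewrite h3 Psi_zero // => s st; rewrite bz // map_poly0.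
have J_Ker : forall F, J F -> phi F = 0.
  move=> F hF; apply: (hF (fun F => phi F = 0)).
  - split; [exact: phi0 | by move=> x y hx hy; rewrite phiD hx hy addr0 | ].
    by move=> r x hx; apply: phiM0.
  - exact: Ker_der.
  - by move=> q [].
split.
- by move/J_Ker; rewrite phi1 => /eqP; rewrite oner_eq0.
- move=> a b /J_Ker hab; have [ha|ha] := eqVneq (phi a) 0; first by left; apply: Ker_J.
  right; have [bb [_ h2 _ h4]] := Rep_all a b.
  have bz := Psi_indep ha (esym (etrans (esym hab) h2)).
  by rewrite Ebig_zero // subr0 in h4.
- by move=> a; apply: Jder.
Qed.

End Main.

Theorem theorem6p3 (K : fieldType) (d : K -> K) (n : nat) (L : {poly K})
    (t : nat) (G : nat -> {poly K}) :
  is_derivation d -> const_alg_closed d -> char_zero K ->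
  (0 < n)%N -> normal_form n L ->
  goodearl_basis d n L t G ->
  let J := @diff_ideal_gen K d t (in_BC d L G) in
  [/\ ~ J 1,
      (forall a b, J (a * b) -> J a \/ J b) &
      (forall a, J a -> J (mderivK d a))].
Proof.
move=> Hd _ Hc n0 hL hG J.
exact: (main_sec Hd Hc n0 hL hG).
Qed.
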